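(* Let $G$ be a scheduling game on $m\ge2$ identical machines of common speed $s>0$ with arbitrary priority lists, in which every job $i$ has negative deterioration $p_i(t)=\max\{\tau_i,b_i-a_it\}$ with $0\le a_i\le s$ (all jobs delay-averse). Then every pure Nash equilibrium $\sigma$ of $G$ satisfies $C_{\max}(\sigma)\le\left(3-\frac1m\right)OPT(G)$; i.e., $PoA({\cal G}^{-DA}_P)\le 3-\frac1m$.
   Context: Scheduling game: a finite set $N$ of $n$ jobs (players) and a set $M$ of $m$ machines. Machine $j$ has speed $s_j>0$ and a priority list $\pi_j$, a bijection $N\to\{1,\dots,n\}$; job $u$ has higher priority than $v$ on $j$ iff $\pi_j(u)<\pi_j(v)$. Negative deterioration: $p_i(t)=\max\{\tau_i,b_i-a_it\}$ with $b_i,a_i\ge0$, $\tau_i>0$. A profile $\sigma\in M^N$ assigns each job to a machine. On machine $j$, the jobs assigned to it, listed in increasing $\pi_j$-order as $i_1,i_2,\dots$, are processed without idle time: $S_{i_1}(\sigma)=0$, $C_{i_k}(\sigma)=S_{i_k}(\sigma)+p_{i_k}(S_{i_k}(\sigma))/s_j$, $S_{i_{k+1}}(\sigma)=C_{i_k}(\sigma)$. The cost of job $i$ is $C_i(\sigma)$. A pure Nash equilibrium (NE) is a profile in which no job can strictly decrease its completion time by unilaterally changing its machine. Makespan $C_{\max}(\sigma)=\max_iC_i(\sigma)$; $OPT(G)=\min_\sigma C_{\max}(\sigma)$ over all profiles. ${\cal G}^{-DA}_P$ denotes the class of all games described in the claim, and its PoA is the supremum over its games of $\max_{\sigma\text{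 NE}}C_{\max}(\sigma)/OPT(G)$. *)

(* Defs.v *)
From HB Require Import structures.
From mathcomp Require Import all_boot all_order all_algebra perm.
Set Implicit Arguments. Unset Strict Implicit. Unset Printing Implicit Defensive.
Import Order.TTheory GRing.Theory Num.Theory.
Local Open Scope ring_scope.

(* Machine j has priority list pi j : {perm 'I_n}; job u has higher priority
   than v on j iff pi j u < pi j v. *)

Definition ptime (R : realFieldType) (tau b a t : R) : R := Num.max tau (b - a * t).

Definition jobs_on (n m : nat) (pi : 'I_m -> {perm 'I_n}) (sigma : 'I_n -> 'I_m)
  (j : 'I_m) : seq 'I_n :=
  sort (fun u v => (pi j u <= pi j v)%N) [seq i <- enum 'I_n | sigma i == j].

Definition step (R : realFieldType) (n : nat) (s : R) (tau b a : 'I_n -> R)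
  (t : R) (k : 'I_n) : R := t + ptime (tau k) (b k) (a k) t / s.

Definition start_time (R : realFieldType) (n m : nat) (s : R) (tau b a : 'I_n -> R)
  (pi : 'I_m -> {perm 'I_n}) (sigma : 'I_n -> 'I_m) (i : 'I_n) : R :=
  let l := jobs_on pi sigma (sigma i) in
  foldl (step s tau b a) 0 (take (index i l) l).

Definition compl_time (R : realFieldType) (n m : nat) (s : R) (tau b a : 'I_n -> R)
  (pi : 'I_m -> {perm 'I_n}) (sigma : 'I_n -> 'I_m) (i : 'I_n) : R :=
  step s tau b a (start_time s tau b a pi sigma i) i.

Definition makespan (R : realFieldType) (n m : nat) (s : R) (tau b a : 'I_n -> R)
  (pi : 'I_m -> {perm 'I_n}) (sigma : 'I_n -> 'I_m) : R :=
  \big[Num.max/0]_(i < n) compl_time s tau b a pi sigma i.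

Definition deviate (n m : nat) (sigma : 'I_n -> 'I_m) (i : 'I_n) (j : 'I_m) : 'I_n -> 'I_m :=
  fun k => if k == i then j else sigma k.

Definition is_NE (R : realFieldType) (n m : nat) (s : R) (tau b a : 'I_n -> R)
  (pi : 'I_m -> {perm 'I_n}) (sigma : 'I_n -> 'I_m) : Prop :=
  forall (i : 'I_n) (j : 'I_m),
    compl_time s tau b a pi sigma i <= compl_time s tau b a pi (deviate sigma i j) i.

(* Main.v *)
Require Import Defs.
From mathcomp Require Import all_boot all_order all_algebra perm.
From mathcomp Require Import ring lra.
Import Order.TTheory GRing.Theory Num.Theory.
Set Implicit Arguments. Unset Strict Implicit. Unset Printing Implicit Defensive.
Local Open Scope ring_scope.

Lemma ptime_ge (R : realFieldType) (tau b a t : R) :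
  tau <= ptime tau b a t /\ b - a * t <= ptime tau b a t.
Proof. by rewrite /ptime !le_max !lexx ?orbT. Qed.

Lemma ptime_anti (R : realFieldType) (tau b a t1 t2 : R) :
  0 <= a -> t1 <= t2 -> ptime tau b a t2 <= ptime tau b a t1.
Proof.
move=> ha ht; rewrite {1}/ptime ge_max; have [h1 h2] := ptime_ge tau b a t1.
rewrite h1 /=; apply: le_trans h2; nra.
Qed.

Lemma step_ge (R : realFieldType) n (s : R) (tau b a : 'I_n -> R) t k :
  0 < s -> 0 < tau k -> t <= step s tau b a t k.
Proof.
move=> hs ht; rewrite /step lerDl; apply: divr_ge0; last exact: ltW.
have [h1 _] := ptime_ge (tau k) (b k) (a k) t; apply: le_trans h1; exact: ltW.
Qed.

Lemma step_mono (R : realFieldType) n (s : R) (tau b a : 'I_n -> R) t1 t2 k :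
  0 < s -> 0 <= a k <= s -> t1 <= t2 -> step s tau b a t1 k <= step s tau b a t2 k.
Proof.
move=> hs /andP[ha1 ha2] ht; rewrite /step.
have [h1 h2] := ptime_ge (tau k) (b k) (a k) t2.
have key : ptime (tau k) (b k) (a k) t1 <= ptime (tau k) (b k) (a k) t2 + s * (t2 - t1).
  rewrite {1}/ptime ge_max; apply/andP; split; nra.
have e : forall t p, t + p / s = (s * t + p) / s.
  by move=> t p; field; rewrite gt_eqF.
rewrite !e ler_pM2r ?invr_gt0 //; lra.
Qed.

Lemma step_T (R : realFieldType) n (s : R) (tau b a : 'I_n -> R) t T k :
  0 < s -> 0 <= a k <= s -> 0 < tau k ->
  step s tau b a t k <= Num.max t T + ptime (tau k) (b k) (a k) T / s.
Proof.
move=> hs ha ht; have [htT|hTt] := leP t T.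
  apply: le_trans (step_mono _ _ hs ha htT) _.
  by [].
rewrite /step lerD2l ler_pM2r ?invr_gt0 //; apply: ptime_anti; [by case/andP: ha|exact: ltW].
Qed.

Lemma step_low (R : realFieldType) n (s : R) (tau b a : 'I_n -> R) t T k :
  0 < s -> 0 <= a k <= s -> t <= T ->
  t + ptime (tau k) (b k) (a k) T / s <= step s tau b a t k.
Proof.
move=> hs /andP[ha _] ht; rewrite /step lerD2l ler_pM2r ?invr_gt0 //.
exact: ptime_anti.
Qed.


Lemma foldl_ge (R : realFieldType) n (s : R) (tau b a : 'I_n -> R) l t :
  0 < s -> (forall k, 0 < tau k) -> t <= foldl (step s tau b a) t l.
Proof.
move=> hs ht; elim: l t => [|x l IH] t //=.
exact: le_trans (step_ge b a t hs (ht x)) (IH _).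
Qed.

Lemma foldl_up (R : realFieldType) n (s : R) (tau b a : 'I_n -> R) l t T :
  0 < s -> (forall k, 0 < tau k) -> (forall k, 0 <= a k <= s) ->
  foldl (step s tau b a) t l <=
  Num.max t T + \sum_(x <- l) ptime (tau x) (b x) (a x) T / s.
Proof.
move=> hs ht ha; elim: l t => [|x l IH] t /=.
  by rewrite big_nil addr0 le_max lexx.
apply: le_trans (IH _) _; rewrite big_cons addrA lerD2r ge_max.
have hq : 0 <= ptime (tau x) (b x) (a x) T / s.
  apply: divr_ge0; last exact: ltW.
  have [h1 _] := ptime_ge (tau x) (b x) (a x) T; apply: le_trans h1; exact: ltW.
rewrite step_T //=; apply: le_trans (_ : Num.max t T <= _); [by rewrite le_max lexx orbT | by rewrite lerDl].
Qed.

Lemma foldl_low (R : realFieldType) n (s : R) (tau b a : 'I_n -> R) l t T :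
  0 < s -> (forall k, 0 < tau k) -> (forall k, 0 <= a k <= s) ->
  foldl (step s tau b a) t l <= T ->
  t + \sum_(x <- l) ptime (tau x) (b x) (a x) T / s <= foldl (step s tau b a) t l.
Proof.
move=> hs ht ha; elim: l t => [|x l IH] t /=.
  by rewrite big_nil addr0.
move=> hf; have h1 := IH _ hf.
have htT : t <= T.
  apply: le_trans (step_ge b a t hs (ht x)) _.
  exact: le_trans (foldl_ge b a l _ hs ht) hf.
rewrite big_cons addrA; apply: le_trans h1; rewrite lerD2r.
exact: step_low.
Qed.

Lemma jobs_on_uniq n m (pi : 'I_m -> {perm 'I_n}) (sg : 'I_n -> 'I_m) j :
  uniq (jobs_on pi sg j).
Proof. by rewrite /jobs_on sort_uniq filter_uniq // enum_uniq. Qed.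

Lemma mem_jobs_on n m (pi : 'I_m -> {perm 'I_n}) (sg : 'I_n -> 'I_m) j x :
  (x \in jobs_on pi sg j) = (sg x == j).
Proof. by rewrite /jobs_on mem_sort mem_filter mem_enum andbT. Qed.

Lemma sum_jobs_on (R : realFieldType) n m (pi : 'I_m -> {perm 'I_n}) (sg : 'I_n -> 'I_m) j
  (F : 'I_n -> R) :
  \sum_(x <- jobs_on pi sg j) F x = \sum_(x | sg x == j) F x.
Proof.
rewrite /jobs_on (perm_big _ (permEl (perm_sort _ _))) big_filter.
by rewrite big_enum_cond; apply: eq_bigl => x; rewrite inE.
Qed.

Lemma notin_take_index (T : eqType) (x : T) (l : seq T) :
  x \notin take (index x l) l.
Proof.
apply/negP => hx.
have := cat_take_drop (index x l) l.
move=> e; have : index x l = index x (take (index x l) l ++ drop (index x l) l) by rewrite e.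
rewrite index_cat hx => e2.
have h1 := index_mem x (take (index x l) l); rewrite hx in h1.
have h2 : (size (take (index x l) l) <= index x l)%N by rewrite size_take_min geq_minl.
rewrite -e2 in h1; have := leq_trans h1 h2; by rewrite ltnn.
Qed.

Lemma sum_sub (R : realFieldType) n (l : seq 'I_n) (P : pred 'I_n) (F : 'I_n -> R) :
  uniq l -> (forall x, x \in l -> P x) -> (forall x, 0 <= F x) ->
  \sum_(x <- l) F x <= \sum_(x | P x) F x.
Proof.
move=> hu hP hF; rewrite big_uniq //= [X in _ <= X]big_mkcond [X in X <= _]big_mkcond /=.
apply: ler_sum => x _; case: ifP => hx; first by rewrite hP.
by case: ifP.
Qed.

Lemma le_bigmax_seq (R : realFieldType) (I : eqType) (r : seq I) (F : I -> R) x :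
  x \in r -> F x <= \big[Num.max/0]_(y <- r) F y.
Proof.
elim: r => [|y r IH] //; rewrite inE big_cons => /orP[/eqP->|hx].
  by rewrite le_max lexx.
by rewrite le_max IH ?orbT.
Qed.

Lemma bigmax_le (R : realFieldType) n (F : 'I_n -> R) B :
  0 <= B -> (forall i, F i <= B) -> \big[Num.max/0]_(i < n) F i <= B.
Proof.
move=> h0 hF; apply: (big_ind (fun x => x <= B)) => //.
by move=> x y hx hy; rewrite ge_max hx hy.
Qed.

Lemma bigmax_ge0 (R : realFieldType) (I : Type) (r : seq I) (F : I -> R) :
  0 <= \big[Num.max/0]_(y <- r) F y.
Proof.
elim: r => [|y r IH]; first by rewrite big_nil.
by rewrite big_cons le_max IH orbT.
Qed.

Lemma sum_partition (R : realFieldType) n m (g : 'I_n -> 'I_m) (F : 'I_n -> R) :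
  \sum_(k < m) \sum_(x | g x == k) F x = \sum_x F x.
Proof. by rewrite (partition_big g xpredT). Qed.

Lemma compl_foldl (R : realFieldType) n m (s : R) (tau b a : 'I_n -> R)
  (pi : 'I_m -> {perm 'I_n}) (sg : 'I_n -> 'I_m) i :
  compl_time s tau b a pi sg i =
  foldl (step s tau b a) 0
    (rcons (take (index i (jobs_on pi sg (sg i))) (jobs_on pi sg (sg i))) i).
Proof. by rewrite foldl_rcons. Qed.

Definition qq (R : realFieldType) n (s : R) (tau b a : 'I_n -> R) T x :=
  ptime (tau x) (b x) (a x) T / s.

Lemma qq_ge0 (R : realFieldType) n (s : R) (tau b a : 'I_n -> R) T x :
  0 < s -> (forall k, 0 < tau k) -> 0 <= qq s tau b a T x.
Proof.
move=> hs ht; apply: divr_ge0; last exact: ltW.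
have [h1 _] := ptime_ge (tau x) (b x) (a x) T; apply: le_trans h1; exact: ltW.
Qed.

Lemma own_bound (R : realFieldType) n m (s : R) (tau b a : 'I_n -> R)
  (pi : 'I_m -> {perm 'I_n}) (sg : 'I_n -> 'I_m) i T :
  0 < s -> (forall k, 0 < tau k) -> (forall k, 0 <= a k <= s) -> 0 <= T ->
  compl_time s tau b a pi sg i <= T + \sum_(x | sg x == sg i) qq s tau b a T x.
Proof.
move=> hs ht ha hT; rewrite compl_foldl.
apply: le_trans (foldl_up b _ _ T hs ht ha) _.
rewrite (max_r hT) lerD2l; apply: sum_sub.
- rewrite rcons_uniq notin_take_index take_uniq //; exact: jobs_on_uniq.
- move=> x; rewrite mem_rcons inE => /orP[/eqP->//|/mem_take].
  by rewrite mem_jobs_on.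
- by move=> x; apply: qq_ge0.
Qed.

Lemma dev_bound (R : realFieldType) n m (s : R) (tau b a : 'I_n -> R)
  (pi : 'I_m -> {perm 'I_n}) (sg : 'I_n -> 'I_m) i k T :
  0 < s -> (forall k, 0 < tau k) -> (forall k, 0 <= a k <= s) -> 0 <= T ->
  compl_time s tau b a pi (deviate sg i k) i <=
  T + \sum_(x | sg x == k) qq s tau b a T x + qq s tau b a 0 i.
Proof.
move=> hs ht ha hT.
have e : deviate sg i k i = k by rewrite /deviate eqxx.
rewrite /compl_time /start_time e.
set l := jobs_on pi (deviate sg i k) k.
set st := foldl _ 0 (take (index i l) l).
apply: le_trans (step_T b st 0 hs (ha i) (ht i)) _.
rewrite (max_l (foldl_ge b a _ _ hs ht)) /qq lerD2r.
apply: le_trans (foldl_up b _ _ T hs ht ha) _.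
rewrite (max_r hT) lerD2l; apply: sum_sub.
- rewrite take_uniq //; exact: jobs_on_uniq.
- move=> x hx; have hxi : x != i.
    by apply/eqP => exi; move: hx; rewrite exi (negbTE (notin_take_index _ _)).
  move: (mem_take hx); rewrite mem_jobs_on /deviate (negbTE hxi) //.
- by move=> x; apply: qq_ge0.
Qed.

Lemma compl_le_mk (R : realFieldType) n m (s : R) (tau b a : 'I_n -> R)
  (pi : 'I_m -> {perm 'I_n}) (sg : 'I_n -> 'I_m) i :
  compl_time s tau b a pi sg i <= makespan s tau b a pi sg.
Proof. by apply: le_bigmax_seq; rewrite mem_index_enum. Qed.

Lemma p0_bound (R : realFieldType) n m (s : R) (tau b a : 'I_n -> R)
  (pi : 'I_m -> {perm 'I_n}) (sg : 'I_n -> 'I_m) i :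
  0 < s -> (forall k, 0 < tau k) -> (forall k, 0 <= a k <= s) ->
  qq s tau b a 0 i <= makespan s tau b a pi sg.
Proof.
move=> hs ht ha; apply: le_trans (compl_le_mk _ _ _ _ pi sg i).
rewrite /compl_time; apply: le_trans (step_mono _ _ hs (ha i) (foldl_ge b a _ _ hs ht)).
by rewrite /step add0r.
Qed.

Lemma machine_lb (R : realFieldType) n m (s : R) (tau b a : 'I_n -> R)
  (pi : 'I_m -> {perm 'I_n}) (sg : 'I_n -> 'I_m) k :
  0 < s -> (forall k, 0 < tau k) -> (forall k, 0 <= a k <= s) ->
  \sum_(x | sg x == k) qq s tau b a (makespan s tau b a pi sg) x
    <= makespan s tau b a pi sg.
Proof.
move=> hs ht ha; set T := makespan _ _ _ _ _ _.
have hT : 0 <= T by apply: bigmax_ge0.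
rewrite -(sum_jobs_on pi).
have hu := jobs_on_uniq pi sg k.
have hm := mem_jobs_on pi sg k.
have hf : foldl (step s tau b a) 0 (jobs_on pi sg k) <= T.
  have [[l0 [x E]]|E] : (exists l0 x, jobs_on pi sg k = rcons l0 x) \/ jobs_on pi sg k = [::].
    by case/lastP: (jobs_on pi sg k) => [|l0 x]; [right|left; exists l0, x].
  2: by rewrite E.
  rewrite E in hu hm; rewrite E foldl_rcons.
  have hx : sg x = k by apply/eqP; rewrite -hm mem_rcons inE eqxx.
  have hxl0 : x \notin l0 by move: hu; rewrite rcons_uniq => /andP[].
  have := compl_le_mk s tau b a pi sg x.
  rewrite /compl_time /start_time hx E -cats1 index_cat (negbTE hxl0) /= eqxx addn0.
  by rewrite take_size_cat.
have := @foldl_low _ _ s tau b a _ 0 T hs ht ha hf; rewrite add0r => h; exact: le_trans h hf.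
Qed.

Theorem theorem12 (R : realFieldType) (n m : nat) (s : R)
  (tau b a : 'I_n -> R) (pi : 'I_m -> {perm 'I_n}) (sigma : 'I_n -> 'I_m) :
  (2 <= m)%N -> 0 < s ->
  (forall i, 0 < tau i) -> (forall i, 0 <= b i) ->
  (forall i, 0 <= a i /\ a i <= s) ->
  is_NE s tau b a pi sigma ->
  forall sigma' : 'I_n -> 'I_m,
    makespan s tau b a pi sigma <= (3 - m%:R^-1) * makespan s tau b a pi sigma'.
Proof.
move=> hm hs ht _ ha' hNE sg'.
have ha : forall k, 0 <= a k <= s by move=> k; case: (ha' k) => -> ->.
set T := makespan s tau b a pi sg'.
have hT : 0 <= T by apply: bigmax_ge0.
set Q := fun k => \sum_(x | sigma x == k) qq s tau b a T x.
have hQ : \sum_(k < m) Q k <= m%:R * T.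
  rewrite /Q sum_partition -(sum_partition sg').
  apply: le_trans (_ : _ <= \sum_(k < m) T) _.
    by apply: ler_sum => k _; apply: machine_lb.
  by rewrite sumr_const card_ord mulr_natl.
have hr : 2%:R <= m%:R :> R by rewrite ler_nat.
set x := m%:R^-1 : R.
have hx : x * m%:R = 1 by rewrite mulVf // gt_eqF //; lra.
have hx0 : 0 <= x by rewrite invr_ge0; lra.
apply: bigmax_le; first by nra.
move=> i; set C := compl_time _ _ _ _ _ _ i.
set j := sigma i.
have hk : forall k : 'I_m, C <= T + Q k + (T - (if k == j then T else 0)).
  move=> k; case: eqP => [->|/eqP hkj].
    rewrite subrr addr0; exact: own_bound.
  rewrite subr0; apply: le_trans (hNE i k) _.
  apply: le_trans (@dev_bound R n m s tau b a pi sigma i k T hs ht ha hT) _.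
  by rewrite lerD2l /T; apply: p0_bound.
have hsum : \sum_(k < m) C <= \sum_(k < m) (T + Q k + (T - (if k == j then T else 0))).
  by apply: ler_sum => k _; exact: hk.
move: hsum; rewrite sumr_const card_ord big_split big_split /= sumrB.
have e1 : \sum_(i0 < m) (if i0 == j then T else 0) = T.
  by rewrite -big_mkcond /= big_pred1_eq.
have e2 : \sum_(i0 < m) T = T *+ m by rewrite sumr_const card_ord.
rewrite e1 e2 -(mulr_natl C) -(mulr_natl T) => hsum.
have h : m%:R * C <= (3 * m%:R - 1) * T by lra.
have := ler_wpM2l hx0 h.
have -> : x * (m%:R * C) = (x * m%:R) * C by ring.
have -> : x * ((3 * m%:R - 1) * T) = (3 * (x * m%:R) - x) * T by ring.
by rewrite hx mul1r mulr1.
Qed.
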